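(* Consider an infinite balls-in-bins process with $d\ge1$ labeled bins: at each time $t=1,2,\ldots$ one ball is placed into a bin chosen uniformly at random from $\{1,\ldots,d\}$, independently over time, and $N^{(i)}_t$ denotes the number of balls in bin $i$ at time $t$. Then almost surely: (1) for each fixed $i\in[d]$, $N^{(i)}_t=\max_{j\in[d]}N^{(j)}_t$ for infinitely many $t$; (2) for each fixed $i,j\in[d]$, $N^{(i)}_t=N^{(j)}_t=\max_{k\in[d]}N^{(k)}_t$ for infinitely many $t$. *)

(* Defs.v *)
From HB Require Import structures.
From mathcomp Require Import all_boot all_order all_algebra.
From mathcomp Require Import all_classical all_reals all_analysis.
Set Implicit Arguments. Unset Strict Implicit. Unset Printing Implicit Defensive.
Import Order.TTheory GRing.Theory Num.Theory.
Local Open Scope classical_set_scope.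
Local Open Scope ring_scope.

(* Balls-in-bins process: X t w : 'I_d is the bin receiving the ball at
   time t.+1 (times t = 1,2,... of the paper are indexed 0,1,... here).
   [iid_uniform P X]: each event {X t = k} is measurable, and for every
   finite set of distinct times s and every assignment of bins v, the
   probability that X t = v t for all t in s is (1/d)^|s|, i.e. the X t
   are mutually independent and uniformly distributed on 'I_d. *)
Definition iid_uniform (dsp : measure_display) (T : measurableType dsp)
  (R : realType) (P : probability T R) (d : nat) (X : nat -> T -> 'I_d) : Prop :=
  (forall (t : nat) (k : 'I_d), measurable (X t @^-1` [set k])) /\
  (forall (s : seq nat) (v : nat -> 'I_d), uniq s ->
     P (\big[setI/setT]_(t <- s) (X t @^-1` [set v t])) =
     (((d%:R)^-1) ^+ size s)%:E).

Definition nballs (T : Type) (d : nat) (X : nat -> T -> 'I_d)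
  (i : 'I_d) (t : nat) (w : T) : nat :=
  \sum_(s < t) (X s w == i).

Definition maxballs (T : Type) (d : nat) (X : nat -> T -> 'I_d)
  (t : nat) (w : T) : nat :=
  \max_(j < d) nballs X j t w.

(* Main.v *)
Require Import Defs.
From HB Require Import structures.
From mathcomp Require Import all_boot all_order all_algebra all_fingroup.
From mathcomp Require Import all_classical all_reals all_analysis.
From mathcomp Require Import zify ring lra.
Set Implicit Arguments. Unset Strict Implicit. Unset Printing Implicit Defensive.
Import Order.TTheory GRing.Theory Num.Theory.
Local Open Scope classical_set_scope.

Section Comb.
Variable d : nat.
Definition word := nat -> 'I_d.
Definition cnt (x : word) (k : 'I_d) (t : nat) : nat := \sum_(s < t) (x s == k).
Definition mx (x : word) (t : nat) : nat := \max_(j < d) cnt x j t.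
Definition Gd (i j : 'I_d) (t : nat) (x : word) : bool :=
  (cnt x i t == mx x t) && (cnt x j t == mx x t).
Definition Bad (i j : 'I_d) (m n : nat) (x : word) : bool :=
  [forall s : 'I_n.+1, (m <= s) ==> ~~ Gd i j s x].
Definition dep (N : nat) (A : word -> bool) :=
  forall x y, (forall k, k < N -> x k = y k) -> A x = A y.

Lemma cnt_dep t x y l : (forall k, k < t -> x k = y k) -> cnt x l t = cnt y l t.
Proof. by move=> h; apply: eq_bigr => s _; rewrite h. Qed.

Lemma mx_dep t x y : (forall k, k < t -> x k = y k) -> mx x t = mx y t.
Proof. by move=> h; apply: eq_bigr => j _; apply: cnt_dep. Qed.

Lemma Gd_dep i j t x y : (forall k, k < t -> x k = y k) -> Gd i j t x = Gd i j t y.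
Proof. by move=> h; rewrite /Gd (cnt_dep _ h) (cnt_dep _ h) (mx_dep h). Qed.

Lemma BadP i j m n x : reflect (forall t, m <= t -> t <= n -> ~~ Gd i j t x) (Bad i j m n x).
Proof.
apply: (iffP forallP) => [h t mt tn|h s].
  by have := h (Ordinal (tn : t < n.+1)); rewrite /= mt.
by apply/implyP => ms; apply: h => //; rewrite -ltnS.
Qed.

Lemma Bad_dep i j m n : dep n (Bad i j m n).
Proof.
move=> x y h; apply/BadP/BadP => H t mt tn; rewrite ?(Gd_dep i j (t:=t) (x:=x) (y:=y)) ?H //;
 try (by move=> k kt; apply: h; apply: leq_trans tn).
by rewrite -(Gd_dep i j (t:=t) (x:=x) (y:=y)) ?H // => k kt; apply: h; apply: leq_trans tn.
Qed.

Lemma Bad_monon i j m n n' x : n <= n' -> Bad i j m n' x -> Bad i j m n x.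
Proof. by move=> nn /BadP h; apply/BadP => t mt tn; apply: h => //; apply: leq_trans nn. Qed.

Lemma Bad_monom i j m m' n x : m <= m' -> Bad i j m n x -> Bad i j m' n x.
Proof. by move=> mm /BadP h; apply/BadP => t mt tn; apply: h => //; apply: leq_trans mt. Qed.

Lemma Bad_lt i j m n x : n < m -> Bad i j m n x.
Proof. by move=> nm; apply/BadP => t mt tn; have := leq_ltn_trans tn (leq_trans nm mt); rewrite ltnn. Qed.

Definition sw (n k : nat) : nat := if k < n then k + n else if k < n + n then k - n else k.

Lemma sum_sw n t (F : nat -> nat) : n + n <= t ->
  \sum_(s < t) F (sw n s) = \sum_(s < t) F s.
Proof.
move=> nt; rewrite -(big_mkord xpredT (fun s => F (sw n s))) -(big_mkord xpredT F).
rewrite !(@big_cat_nat _ _ _ (n + n) 0 t) //=.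
rewrite !(@big_cat_nat _ _ _ n 0 (n + n)) //= ?leq_addr //.
have e3 : \sum_(n + n <= s < t) F (sw n s) = \sum_(n + n <= s < t) F s.
  by apply: eq_big_nat => k /andP[k1 k2]; rewrite /sw ltnNge (leq_trans (leq_addr n n) k1) /= ltnNge k1.
have e1 : \sum_(0 <= s < n) F (sw n s) = \sum_(n <= s < n + n) F s.
  have := @big_addn _ 0 addn 0 (n + n) n xpredT F; rewrite add0n addnK => ->.
  by apply: eq_big_nat => k /andP[_ k2]; rewrite /sw k2.
have e2 : \sum_(n <= s < n + n) F (sw n s) = \sum_(0 <= s < n) F s.
  have := @big_addn _ 0 addn 0 (n + n) n xpredT (fun s => F (sw n s)); rewrite add0n addnK => ->.
  apply: eq_big_nat => k /andP[_ k2].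
  by rewrite /sw ltnNge leq_addl /= ltn_add2r k2 addnK.
by rewrite e3 e2 e1 [X in X + _ = _]addnC.
Qed.

Lemma cnt_sw n t x l : n + n <= t -> cnt (x \o sw n) l t = cnt x l t.
Proof.
move=> nt; rewrite /cnt.
exact: (sum_sw (fun s => nat_of_bool (x s == l)) nt).
Qed.


Lemma mx_sw n t x : n + n <= t -> mx (x \o sw n) t = mx x t.
Proof. by move=> nt; apply: eq_bigr => j _; apply: cnt_sw. Qed.

Lemma Gd_sw i j n t x : n + n <= t -> Gd i j t (x \o sw n) = Gd i j t x.
Proof. by move=> nt; rewrite /Gd !cnt_sw // mx_sw. Qed.

Lemma Bad_sw i j n m N x : n + n <= m -> Bad i j m N (x \o sw n) = Bad i j m N x.
Proof.
move=> nm; apply/BadP/BadP => h t mt tN; have := h t mt tN;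
  by rewrite Gd_sw // (leq_trans nm mt).
Qed.

Lemma sw_shift n (x : word) k : k < n -> (x \o sw n) (k + n) = x k.
Proof. by move=> kn; rewrite /= /sw ltnNge leq_addl /= ltn_add2r kn addnK. Qed.

Lemma sw_lt n N k : n + n <= N -> k < N -> sw n k < N.
Proof.
move=> nN kN; rewrite /sw; case: ifP => k1; first by apply: leq_trans nN; rewrite ltn_add2r.
case: ifP => // k2; apply: leq_ltn_trans kN; exact: leq_subr.
Qed.

Lemma sw_inv n k : sw n (sw n k) = k.
Proof. rewrite /sw; do !case: ifP; lia. Qed.

Lemma cnt_lab (s : {perm 'I_d}) x l t : cnt (s \o x) (s l) t = cnt x l t.
Proof. by apply: eq_bigr => k _; rewrite /= (inj_eq perm_inj). Qed.

Lemma mx_lab (s : {perm 'I_d}) x t : mx (s \o x) t = mx x t.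
Proof.
rewrite /mx (reindex_inj (@perm_inj _ s)) /=.
by apply: eq_bigr => j _; rewrite cnt_lab.
Qed.

Lemma Gd_lab (s : {perm 'I_d}) i j t x : Gd (s i) (s j) t (s \o x) = Gd i j t x.
Proof. by rewrite /Gd !cnt_lab mx_lab. Qed.

Lemma Bad_lab (s : {perm 'I_d}) i j m n x : Bad (s i) (s j) m n (s \o x) = Bad i j m n x.
Proof. by apply/BadP/BadP => h t mt tn; have := h t mt tn; rewrite Gd_lab. Qed.

Lemma cnt_le_mx x l t : cnt x l t <= mx (x : word) t.
Proof. by rewrite /mx; apply: (@leq_bigmax _ (fun j => cnt x j t) l). Qed.

Lemma mx_att (hd : 0 < d) x t : exists L, cnt x L t = mx (x : word) t.
Proof.
have hd' : 0 < #|'I_d| by rewrite card_ord.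
have [L HL] := @bigop.eq_bigmax _ (fun j => cnt x j t) hd'.
by exists L; rewrite /mx HL.
Qed.

Lemma cntS x l t : cnt x l t.+1 = cnt x l t + ((x : word) t == l).
Proof. by rewrite /cnt big_ord_recr. Qed.

Lemma lead (x : word) m n L :
  (forall t k l, m <= t -> t <= n -> k != l -> ~~ Gd k l t x) ->
  cnt x L m = mx x m -> forall t, m <= t -> t <= n -> cnt x L t = mx x t.
Proof.
move=> noT HL t mt; elim: t mt => [|t IH] mt tn.
  by move: mt; rewrite leqn0 => /eqP <-.
case: (ltngtP m t.+1) mt => // [mt _|<- _]; last by [].
have IHt := IH mt (ltnW tn).
apply/eqP; rewrite eqn_leq cnt_le_mx /=.
apply/bigmax_leqP => l _.
case: (eqVneq L l) => [->//|Ll].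
have hl : cnt x l t < cnt x L t.
  rewrite ltn_neqAle IHt cnt_le_mx andbT.
  apply: contraNneq (noT t L l mt (ltnW tn) Ll) => e.
  by rewrite /Gd IHt e !eqxx.
rewrite !cntS; apply: leq_trans (leq_addr _ _).
by apply: leq_trans hl; rewrite -addn1 leq_add2l; case: (x t == l).
Qed.

Lemma cover1 (hd : 0 < d) (x : word) m : exists l, ~~ Bad l l m m x.
Proof.
have [L HL] := mx_att hd x m.
exists L; apply/negP => /BadP /(_ m (leqnn m) (leqnn m)).
by rewrite /Gd HL eqxx.
Qed.

Lemma cover2 (i j : 'I_d) (x : word) m n : i != j ->
  exists k l, (if k == l then Bad k k m n x else ~~ Bad k l m n x).
Proof.
move=> ij.
case: (boolP [exists k, exists l, (k != l) && ~~ Bad k l m n x]).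
  move=> /existsP[k /existsP[l /andP[kl nb]]]; exists k, l.
  by rewrite (negbTE kl).
rewrite negb_exists => /forallP H.
have noT : forall t k l, m <= t -> t <= n -> k != l -> ~~ Gd k l t x.
  move=> t k l mt tn kl; have := H k; rewrite negb_exists => /forallP /(_ l).
  by rewrite kl /= negbK => /BadP; apply.
case: (ltnP n m) => [nm|mn].
  by exists i, i; rewrite eqxx Bad_lt.
have hd : 0 < d by case: d i {ij H noT} => [[]|].
have [L HL] := mx_att hd x m.
have Lmax := lead noT HL.
pose k := if i != L then i else j.
have kL : k != L.
  rewrite /k; case: (boolP (i != L)) => //; rewrite negbK => /eqP <-.
  by rewrite eq_sym.
exists k, k; rewrite eqxx; apply/BadP => t mt tn; apply/negP => Gk.
have := noT t L k mt tn.
have G' : Gd L k t x by move: Gk; rewrite /Gd (Lmax t mt tn) eqxx => /andP[].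
have kL' : L != k by rewrite eq_sym.
by move=> /(_ kL'); rewrite G'.
Qed.

End Comb.

Lemma in_bigI (T : Type) (s : seq nat) (F : nat -> set T) w :
  (\big[setI/setT]_(t <- s) F t) w <-> (forall t, t \in s -> F t w).
Proof.
elim: s => [|a s IH]; first by rewrite big_nil; split.
rewrite big_cons; split.
  by move=> [Fa /IH H] t; rewrite inE => /orP[/eqP->//|]; apply: H.
move=> H; split; first by apply: H; rewrite inE eqxx.
by apply/IH => t ts; apply: H; rewrite inE ts orbT.
Qed.

Lemma in_bigU (T : Type) (I : eqType) (s : seq I) (Q : pred I) (F : I -> set T) w :
  (\big[setU/set0]_(i <- s | Q i) F i) w <-> (exists i, [/\ i \in s, Q i & F i w]).
Proof.
elim: s => [|a s IH]; first by rewrite big_nil; split => [[]|[i []]].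
rewrite big_cons; case: ifP => Qa; split.
- case=> [Fa|/IH [i [i1 i2 i3]]]; first by exists a; rewrite inE eqxx.
  by exists i; rewrite inE i1 orbT.
- move=> [i [+ Qi Fi]]; rewrite inE => /orP[/eqP ei|iis]; first by left; rewrite -ei.
  by right; apply/IH; exists i.
- by move=> /IH [i [i1 i2 i3]]; exists i; rewrite inE i1 orbT.
- move=> [i [+ Qi Fi]]; rewrite inE => /orP[/eqP ei|iis]; first by rewrite -ei Qi in Qa.
  by apply/IH; exists i.
Qed.

Section Deps.
Variable d : nat.
Implicit Types A B : word d -> bool.

Lemma dep_le N N' A : N <= N' -> dep N A -> dep N' A.
Proof. by move=> NN HA x y h; apply: HA => k kN; apply: h; apply: leq_trans NN. Qed.

Lemma dep_and N A B : dep N A -> dep N B -> dep N (fun x => A x && B x).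
Proof. by move=> HA HB x y h; rewrite (HA x y h) (HB x y h). Qed.

Lemma dep_or N A B : dep N A -> dep N B -> dep N (fun x => A x || B x).
Proof. by move=> HA HB x y h; rewrite (HA x y h) (HB x y h). Qed.

Lemma dep_neg N A : dep N A -> dep N (fun x => ~~ A x).
Proof. by move=> HA x y h; rewrite (HA x y h). Qed.

Lemma dep_cst N b : dep N (fun _ : word d => b).
Proof. by []. Qed.

Lemma dep_lab N A (s : {perm 'I_d}) : dep N A -> dep N (fun x => A (s \o x)).
Proof. by move=> HA x y h; apply: HA => k kN /=; rewrite h. Qed.

Lemma dep_sw N n A : n + n <= N -> dep N A -> dep N (fun x => A (x \o sw n)).
Proof. by move=> nN HA x y h; apply: HA => k kN /=; rewrite h // sw_lt. Qed.

Lemma dep_shift n A : dep n A -> dep (n + n) (fun x => A (fun k => x (k + n))).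
Proof. by move=> HA x y h; apply: HA => k kn; rewrite h // ltn_add2r. Qed.

Lemma dep_has N (I : Type) (s : seq I) (E : I -> word d -> bool) :
  (forall i, dep N (E i)) -> dep N (fun x => has (fun i => E i x) s).
Proof.
move=> HE x y h; elim: s => [|a s IH] //=.
by rewrite (HE a x y h) IH.
Qed.

End Deps.

Local Open Scope ring_scope.
Section Prob.
Context (dsp : measure_display) (T : measurableType dsp) (R : realType)
  (P : probability T R) (d : nat) (hd : (0 < d)%N) (X : nat -> T -> 'I_d)
  (hX : iid_uniform P X).

Definition path (w : T) : word d := fun k => X k w.
Definition S (A : word d -> bool) : set T := [set w | A (path w)].
Definition ext N (f : {ffun 'I_N -> 'I_d}) : word d :=
  fun k => if insub k is Some i then f i else Ordinal hd.

Lemma ext_ord N (f : {ffun 'I_N -> 'I_d}) (i : 'I_N) : ext f i = f i.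
Proof. by rewrite /ext valK. Qed.

Definition cyl N (f : {ffun 'I_N -> 'I_d}) : set T :=
  \big[setI/setT]_(t <- iota 0 N) (X t @^-1` [set ext f t]).

Lemma cylP N (f : {ffun 'I_N -> 'I_d}) w : cyl f w <-> forall k : 'I_N, X k w = f k.
Proof.
rewrite /cyl in_bigI; split => H.
  by move=> k; rewrite -ext_ord; apply: H; rewrite mem_iota /= add0n ltn_ord.
move=> t; rewrite mem_iota add0n /= => tN.
by have := H (Ordinal tN); rewrite /= -(ext_ord f (Ordinal tN)).
Qed.

Lemma cyl_meas N (f : {ffun 'I_N -> 'I_d}) : measurable (cyl f).
Proof. by apply: bigsetI_measurable => t _; apply: hX.1. Qed.

Lemma P_cyl N (f : {ffun 'I_N -> 'I_d}) : P (cyl f) = (((d%:R : R)^-1) ^+ N)%:E.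
Proof. by rewrite /cyl hX.2 ?iota_uniq // size_iota. Qed.


Lemma S_decomp N A : dep N A ->
  S A = \big[setU/set0]_(f : {ffun 'I_N -> 'I_d} | A (ext f)) cyl f.
Proof.
move=> HA; apply/seteqP; split => w.
  move=> Aw; apply/in_bigU; exists [ffun k : 'I_N => X k w]; split.
  - exact: mem_index_enum.
  - rewrite (HA _ (path w)) // => k kN.
    by have := ext_ord [ffun k : 'I_N => X k w] (Ordinal kN); rewrite ffunE.
  - by apply/cylP => k; rewrite ffunE.
move=> /in_bigU [f [_ Af /cylP cf]]; rewrite /S /= (HA _ (ext f)) // => k kN.
by have := cf (Ordinal kN); have := ext_ord f (Ordinal kN); rewrite /path /= => -> ->.
Qed.

Lemma S_meas N A : dep N A -> measurable (S A).
Proof.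
by move=> HA; rewrite (S_decomp HA); apply: bigsetU_measurable => f _; apply: cyl_meas.
Qed.

Lemma cyl_disj N (f g : {ffun 'I_N -> 'I_d}) : f != g -> cyl f `&` cyl g = set0.
Proof.
move=> fg; apply/seteqP; split => w // [/cylP cf /cylP cg].
have fg' : f = g by apply/ffunP => k; rewrite -cf -cg.
by rewrite fg' eqxx in fg.
Qed.

Lemma P_bigU N (s : seq {ffun 'I_N -> 'I_d}) (Q : pred {ffun 'I_N -> 'I_d}) :
  uniq s -> P (\big[setU/set0]_(f <- s | Q f) cyl f) = (\sum_(f <- s | Q f) P (cyl f))%E.
Proof.
elim: s => [|a s IH]; first by rewrite !big_nil measure0.
rewrite /= => /andP[nas us]; rewrite !big_cons; case: ifP => Qa; last exact: IH.
rewrite measureU //.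
- by congr (_ + _)%E; apply: IH.
- exact: cyl_meas.
- by apply: bigsetU_measurable => f _; apply: cyl_meas.
apply/seteqP; split => w // [cw /in_bigU [f [fs _ cf]]].
have af : a != f by apply: contraNneq nas => ->.
by rewrite -(cyl_disj af); split.
Qed.

Definition prc N (A : word d -> bool) : R :=
  \sum_(f : {ffun 'I_N -> 'I_d} | A (ext f)) ((d%:R : R)^-1) ^+ N.

Lemma PS N A : dep N A -> P (S A) = (prc N A)%:E.
Proof.
move=> HA; rewrite (S_decomp HA) P_bigU ?index_enum_uniq // /prc -sumEFin.
by apply: eq_bigr => f _; rewrite P_cyl.
Qed.

Definition pr (A : word d -> bool) : R := fine (P (S A)).

Lemma prE N A : dep N A -> pr A = prc N A.
Proof. by move=> HA; rewrite /pr (PS HA). Qed.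


Lemma prEF N A : dep N A -> P (S A) = (pr A)%:E.
Proof. by move=> HA; rewrite (prE HA) (PS HA). Qed.

Lemma pr_ext (A B : word d -> bool) : A =1 B -> pr A = pr B.
Proof. by move=> e; rewrite /pr /S; congr (fine (P _)); apply/seteqP; split => w /=; rewrite e. Qed.

Lemma pr_ge0 N A : dep N A -> 0 <= pr A.
Proof.
move=> HA; rewrite (prE HA); apply: sumr_ge0 => f _.
by rewrite exprn_ge0 // invr_ge0.
Qed.

Lemma pr_le N N' A B : dep N A -> dep N' B -> (forall x, A x -> B x) -> pr A <= pr B.
Proof.
move=> HA HB AB; rewrite -lee_fin -(prEF HA) -(prEF HB).
by apply: le_measure; rewrite ?inE; [exact: S_meas HA|exact: S_meas HB|move=> w; apply: AB].
Qed.


Lemma pr_split N A B : dep N A -> dep N B ->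
  pr B = pr (fun x => B x && A x) + pr (fun x => B x && ~~ A x).
Proof.
move=> HA HB; apply: EFin_inj; rewrite EFinD.
rewrite -(prEF HB) -(prEF (dep_and HB HA)) -(prEF (dep_and HB (dep_neg HA))).
rewrite -measureU; first congr (P _).
- by apply/seteqP; split => w /=; rewrite /S /=; case: (A _); case: (B _) => //; tauto.
- exact: S_meas (dep_and HB HA).
- exact: S_meas (dep_and HB (dep_neg HA)).
- by apply/seteqP; split => w //; rewrite /S /= => -[/andP[_ ->] /andP[]].
Qed.

Lemma pr_or N A B : dep N A -> dep N B -> pr (fun x => A x || B x) <= pr A + pr B.
Proof.
move=> HA HB; rewrite -lee_fin EFinD -(prEF HA) -(prEF HB) -(prEF (dep_or HA HB)).
have -> : S (fun x => A x || B x) = S A `|` S B.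
  apply/seteqP; split => w; rewrite /S /=; first by case/orP; [left|right].
  by case=> ->; rewrite ?orbT.
by apply: measureU2; [exact: S_meas HA|exact: S_meas HB].
Qed.

Lemma pr_true : pr (fun _ => true) = 1.
Proof.
rewrite /pr (_ : S _ = setT) ?probability_setT //.
by apply/seteqP; split => w.
Qed.

Lemma pr_false : pr (fun _ => false) = 0.
Proof.
rewrite /pr (_ : S _ = set0) ?measure0 //.
by apply/seteqP; split => w.
Qed.

Lemma pr_neg N A : dep N A -> pr (fun x => ~~ A x) = 1 - pr A.
Proof.
move=> HA; rewrite -pr_true (pr_split HA (@dep_cst d N true)) /=.
rewrite (pr_ext (A := fun x => true && A x) (B := A)) //.
by rewrite addrAC subrr add0r; apply: pr_ext.
Qed.

Lemma pr_has N (I : Type) (s : seq I) (E : I -> word d -> bool) :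
  (forall i, dep N (E i)) -> pr (fun x => has (fun i => E i x) s) <= \sum_(i <- s) pr (E i).
Proof.
move=> HE; elim: s => [|a s IH]; first by rewrite big_nil /= pr_false.
rewrite big_cons /=; apply: le_trans (pr_or (HE a) (dep_has s HE)) _.
exact: lerD.
Qed.

Lemma pr_exists N (I : finType) (E : I -> word d -> bool) :
  (forall i, dep N (E i)) -> pr (fun x => [exists i, E i x]) <= \sum_i pr (E i).
Proof.
move=> HE; rewrite (pr_ext (B := fun x => has (fun i => E i x) (index_enum I))).
  exact: pr_has.
move=> x; apply/existsP/hasP => [[i Ei]|[i _ Ei]]; last by exists i.
by exists i => //; rewrite mem_index_enum.
Qed.


Lemma pr_lab N A (s : {perm 'I_d}) : dep N A -> pr (fun x => A (s \o x)) = pr A.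
Proof.
move=> HA; rewrite (prE (dep_lab s HA)) (prE HA) /prc.
pose h (f : {ffun 'I_N -> 'I_d}) := [ffun i => s (f i)].
have hinj : injective h.
  by move=> f g /ffunP e; apply/ffunP => i; have := e i; rewrite !ffunE => /perm_inj.
rewrite [RHS](reindex_inj hinj); apply: eq_bigl => f.
apply: HA => k kN; have := ext_ord (h f) (Ordinal kN); rewrite ffunE /= => ->.
by have := ext_ord f (Ordinal kN) => /= ->.
Qed.

Lemma pr_sw N n A : (n + n <= N)%N -> dep N A -> pr (fun x => A (x \o sw n)) = pr A.
Proof.
move=> nN HA; rewrite (prE (dep_sw nN HA)) (prE HA) /prc.
pose swo (i : 'I_N) : 'I_N := Ordinal (sw_lt nN (ltn_ord i)).
have swoK : involutive swo by move=> i; apply: val_inj; rewrite /= sw_inv.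
pose h (f : {ffun 'I_N -> 'I_d}) := [ffun i => f (swo i)].
have hK : involutive h by move=> f; apply/ffunP => i; rewrite !ffunE swoK.
rewrite [RHS](reindex_inj (inv_inj hK)); apply: eq_bigl => f.
apply: HA => k kN; have := ext_ord (h f) (Ordinal kN); rewrite ffunE /= => ->.
by have := ext_ord f (swo (Ordinal kN)) => /= ->.
Qed.


Lemma pr_indep n A : dep n A ->
  pr (fun x => A x && A (fun k => x (k + n)%N)) = pr A ^+ 2.
Proof.
move=> HA.
have HB := dep_and (dep_le (leq_addr n n) HA) (dep_shift HA).
rewrite (prE HB) (prE HA) /prc.
pose h (p : {ffun 'I_n -> 'I_d} * {ffun 'I_n -> 'I_d}) : {ffun 'I_(n + n) -> 'I_d} :=
  [ffun k : 'I_(n + n) => match fintype.split k with inl a => p.1 a | inr b => p.2 b end].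
have hl p (a : 'I_n) : h p (lshift n a) = p.1 a.
  rewrite ffunE; case: splitP => [j e|j e]; first by congr (p.1 _); apply: val_inj.
  by move: e (ltn_ord a) => /= ->; rewrite ltnNge leq_addr.
have hr p (b : 'I_n) : h p (rshift n b) = p.2 b.
  rewrite ffunE; case: splitP => [j e|j e]; last first.
    by congr (p.2 _); apply: val_inj; move: e => /= /eqP; rewrite eqn_add2l => /eqP.
  by move: e (ltn_ord j) => /= <-; rewrite ltnNge leq_addr.
pose g (f : {ffun 'I_(n + n) -> 'I_d}) :=
  ([ffun a : 'I_n => f (lshift n a)], [ffun b : 'I_n => f (rshift n b)]).
have hbij : bijective h.
  exists g.
    case=> p1 p2; rewrite /g; congr (_, _); apply/ffunP => a; by rewrite ffunE ?hl ?hr.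
  move=> f; apply/ffunP => k; rewrite ffunE; case: splitP => [j e|j e] /=; rewrite ffunE.
    by congr (f _); apply: val_inj.
  by congr (f _); apply: val_inj; rewrite /= e.
rewrite (reindex h); last by apply: onW_bij.
have eB p : (A (ext (h p)) && A (fun k => ext (h p) (k + n)%N)) = A (ext p.1) && A (ext p.2).
  congr andb; apply: HA => k kn.
    have := ext_ord (h p) (lshift n (Ordinal kn)); rewrite hl /= => ->.
    by have := ext_ord p.1 (Ordinal kn) => /= ->.
  have e : (k + n = rshift n (Ordinal kn))%N by rewrite /= addnC.
  rewrite e ext_ord hr.
  by have := ext_ord p.2 (Ordinal kn) => /= ->.
rewrite (eq_bigl _ _ eB) -(pair_big (fun f => A (ext f)) (fun f => A (ext f)) (fun _ _ => ((d%:R : R)^-1) ^+ (n + n))) /=.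
rewrite expr2 big_distrlr /=; apply: eq_bigr => f _; apply: eq_bigr => f' _.
by rewrite exprD.
Qed.


Lemma pr_le1 N A : dep N A -> pr A <= 1.
Proof. by move=> HA; rewrite -pr_true; apply: (pr_le (N' := 0%N) HA) => //. Qed.

Section ZeroOne.
Variables i j : 'I_d.

Let Bd m n := Bad i j m n.
Let Bdep m n : dep n (Bd m n) := @Bad_dep d i j m n.

Lemma prB_ge0 m n : 0 <= pr (Bd m n).
Proof. exact: pr_ge0 (@Bdep m n). Qed.
Lemma prB_le1 m n : pr (Bd m n) <= 1.
Proof. exact: pr_le1 (@Bdep m n). Qed.

Lemma prB_monon m n n' : (n <= n')%N -> pr (Bd m n') <= pr (Bd m n).
Proof. by move=> nn; apply: pr_le (@Bdep m n') (@Bdep m n) _ => x; apply: Bad_monon. Qed.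
Lemma prB_monom m m' n : (m <= m')%N -> pr (Bd m n) <= pr (Bd m' n).
Proof. by move=> mm; apply: pr_le (@Bdep m n) (@Bdep m' n) _ => x; apply: Bad_monom. Qed.

Definition bE m := range (fun n => pr (Bd m n)).
Definition bb m := inf (bE m).
Definition pp := sup (range bb).

Lemma hinf m : has_inf (bE m).
Proof.
split; first by exists (pr (Bd m 0)), 0%N.
by exists 0 => _ [n _ <-]; apply: prB_ge0.
Qed.

Lemma bb_le m n : bb m <= pr (Bd m n).
Proof. by apply: ge_inf; [exact: (hinf m).2|exists n]. Qed.
Lemma bb_ge0 m : 0 <= bb m.
Proof. by apply: lb_le_inf; [exists (pr (Bd m 0)), 0%N|move=> _ [n _ <-]; apply: prB_ge0]. Qed.
Lemma bb_le1 m : bb m <= 1.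
Proof. exact: le_trans (bb_le m 0) (prB_le1 m 0). Qed.

Lemma hsup : has_sup (range bb).
Proof.
split; first by exists (bb 0), 0%N.
by exists 1 => _ [m _ <-]; apply: bb_le1.
Qed.

Lemma bb_le_pp m : bb m <= pp.
Proof. by apply: sup_upper_bound; [exact: hsup|exists m]. Qed.
Lemma pp_ge0 : 0 <= pp.
Proof. exact: le_trans (bb_ge0 0) (bb_le_pp 0). Qed.
Lemma pp_le1 : pp <= 1.
Proof. by apply: ge_sup; [exists (bb 0), 0%N|move=> _ [m _ <-]; apply: bb_le1]. Qed.

Lemma bb_adh m e : 0 < e -> exists n, pr (Bd m n) < bb m + e.
Proof. by move=> e0; have [_ [n _ <-] H] := inf_adherent e0 (hinf m); exists n. Qed.
Lemma pp_adh e : 0 < e -> exists m, pp - e < bb m.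
Proof. by move=> e0; have [_ [m _ <-] H] := sup_adherent e0 hsup; exists m. Qed.


Lemma step e : 0 < e -> pp - e < (pp + e) ^+ 2 + 4 * e.
Proof.
move=> e0.
have [m hm] := pp_adh e0.
have [n hn] := bb_adh m e0.
pose M := maxn m (n + n).
have [N0 hN0] := bb_adh M e0.
pose N := maxn N0 M.
have mM : (m <= M)%N := leq_maxl _ _.
have nnM : (n + n <= M)%N := leq_maxr _ _.
have MN : (M <= N)%N := leq_maxr _ _.
have N0N : (N0 <= N)%N := leq_maxl _ _.
have nnN : (n + n <= N)%N := leq_trans nnM MN.
have nN : (n <= N)%N := leq_trans (leq_addr n n) nnN.
pose A := Bd m n.
pose A' := fun x : word d => A (fun k => x (k + n)%N).
pose B := Bd M N.
have dA : dep n A := @Bdep m n.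
have dA' : dep (n + n) A' := dep_shift dA.
have dB : dep N B := @Bdep M N.
have dAN := dep_le nN dA.
have dA'N := dep_le nnN dA'.
have h1 : pr B <= pr (fun x => A x && A' x) + pr (fun x => B x && ~~ A x)
                  + pr (fun x => B x && ~~ A' x).
  have dU := dep_or (dep_or (dep_and dAN dA'N) (dep_and dB (dep_neg dAN)))
                    (dep_and dB (dep_neg dA'N)).
  apply: le_trans (pr_le dB dU _) _.
    by move=> x Bx; rewrite Bx /=; case: (A x); case: (A' x).
  apply: le_trans (pr_or (dep_or (dep_and dAN dA'N) (dep_and dB (dep_neg dAN)))
                         (dep_and dB (dep_neg dA'N))) _.
  by rewrite lerD2r; apply: pr_or (dep_and dAN dA'N) (dep_and dB (dep_neg dAN)).
have h2 : pr (fun x => B x && ~~ A' x) = pr (fun x => B x && ~~ A x).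
  rewrite -(pr_sw nnN (dep_and dB (dep_neg dA'N))); apply: pr_ext => x /=.
  rewrite /B /Bd Bad_sw //; congr (_ && ~~ _); rewrite /A'.
  by apply: dA => k kn; apply: sw_shift.
have h9 : pr (Bd m N) <= pr (fun x => B x && A x).
  apply: pr_le (@Bdep m N) (dep_and dB dAN) _ => x Bx.
  by rewrite /B /A /Bd (Bad_monom mM Bx) (Bad_monon nN Bx).
have h3 := pr_split dAN dB.
have h4 : pr (fun x => A x && A' x) = pr A ^+ 2 := pr_indep dA.
have h5 : pr B <= pp + e.
  apply: le_trans (prB_monon M N0N) _; apply: ltW; apply: lt_le_trans hN0 _.
  by rewrite lerD2r bb_le_pp.
have h6 : pp - e < pr (Bd m N) by apply: lt_le_trans hm (bb_le m N).
have h7 : pr A < pp + e by apply: lt_le_trans hn _; rewrite lerD2r bb_le_pp.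
have h8 : 0 <= pr A := pr_ge0 dA.
have h10 : 0 <= pr (fun x => B x && A x) := pr_ge0 (dep_and dB dAN).
have hsq : pr A ^+ 2 <= (pp + e) ^+ 2.
  by rewrite lerXn2r ?nnegrE ?(ltW h7) // (le_trans h8 (ltW h7)).
rewrite h2 h4 in h1.
lra.
Qed.

Lemma pp01 : pp = 0 \/ pp = 1.
Proof.
have p0 := pp_ge0; have p1 := pp_le1.
have q0 : 0 <= pp - pp ^+ 2 by nra.
have [qpos|q00] := ltrP 0 (pp - pp ^+ 2).
  pose e := (pp - pp ^+ 2) / 8.
  have e0 : 0 < e by rewrite /e divr_gt0.
  have hs := step e0.
  have h1 : pp * e <= e by nra.
  have q14 : pp - pp ^+ 2 <= 1 / 4.
    have := sqr_ge0 (pp - 1 / 2); rewrite !expr2; lra.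
  have qe : pp - pp ^+ 2 = 8 * e by rewrite /e; field.
  have e32 : e <= 1 / 32 by lra.
  have h2 : e * e <= e / 32 by nra.
  have ex : (pp + e) ^+ 2 = pp ^+ 2 + 2 * (pp * e) + e * e by rewrite !expr2; ring.
  rewrite ex in hs; lra.
have : pp * (1 - pp) = 0 by apply/eqP; rewrite eq_le; apply/andP; split; nra.
by move/eqP; rewrite mulf_eq0 subr_eq0 => /orP[/eqP->|/eqP<-]; [left|right].
Qed.

Lemma zero_one :
  (forall m e, 0 < e -> exists n, pr (Bad i j m n) < e) \/
  (forall e, 0 < e -> exists m, forall n, 1 - e < pr (Bad i j m n)).
Proof.
case: pp01 => hp; [left|right].
  move=> m e e0; have [n hn] := bb_adh m e0; exists n.
  have : bb m = 0 by apply/eqP; rewrite eq_le bb_ge0 andbT -hp bb_le_pp.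
  by move=> b0; rewrite b0 add0r in hn.
move=> e e0; have [m hm] := pp_adh e0; exists m => n.
by rewrite -hp; apply: lt_le_trans hm (bb_le m n).
Qed.

End ZeroOne.


Lemma pr_Bad_lab (s : {perm 'I_d}) i j m n :
  pr (Bad (s i) (s j) m n) = pr (Bad i j m n).
Proof.
rewrite -(pr_lab s (@Bad_dep d (s i) (s j) m n)); apply: pr_ext => x.
by rewrite Bad_lab.
Qed.

Lemma pr_Bad_diag k l m n : pr (Bad k k m n) = pr (Bad l l m n).
Proof. by rewrite -(pr_Bad_lab (tperm k l)) tpermL. Qed.

Lemma dnz : (d%:R : R) != 0.
Proof. by rewrite pnatr_eq0 -lt0n. Qed.

Lemma part1 k : forall m e, 0 < e -> exists n, pr (Bad k k m n) < e.
Proof.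
case: (zero_one k k) => // H; exfalso.
pose e := (d%:R : R)^-1 / 2.
have e0 : 0 < e by rewrite /e divr_gt0 // invr_gt0 ltr0n.
have [m hm] := H e e0.
have hl l : pr (fun x => ~~ Bad l l m m x) <= e.
  rewrite (pr_neg (@Bad_dep d l l m m)) (pr_Bad_diag l k).
  by have := hm m; lra.
have : pr (fun _ => true) <= \sum_(l < d) pr (fun x => ~~ Bad l l m m x).
  rewrite (pr_ext (B := fun x => [exists l, ~~ Bad l l m m x])).
    by apply: pr_exists => l; apply: dep_neg; apply: Bad_dep.
  by move=> x; symmetry; apply/existsP; apply: cover1.
rewrite pr_true => h1.
have h2 : \sum_(l < d) pr (fun x => ~~ Bad l l m m x) <= \sum_(l < d) e.
  by apply: ler_sum => l _; apply: hl.
have e2 : e * d%:R = 1 / 2 by rewrite /e; field; apply: dnz.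
rewrite sumr_const card_ord -mulr_natr e2 in h2.
lra.
Qed.

Lemma perm_pair (i j k l : 'I_d) : i != j -> k != l ->
  exists s : {perm 'I_d}, s i = k /\ s j = l.
Proof.
move=> ij kl; pose j' := tperm i k j.
have j'k : j' != k.
  by rewrite /j' -[in X in _ != X](tpermL i k) (inj_eq perm_inj) eq_sym.
exists (tperm i k * tperm j' l)%g; rewrite !permM tpermL tpermL; split => //.
by rewrite tpermD // eq_sym.
Qed.

Lemma part2 i j : i != j -> forall m e, 0 < e -> exists n, pr (Bad i j m n) < e.
Proof.
move=> ij; case: (zero_one i j) => // H; exfalso.
pose e := ((d%:R : R) ^+ 2)^-1 / 2.
have e0 : 0 < e by rewrite /e divr_gt0 // invr_gt0 exprn_gt0 // ltr0n.
have [m hm] := H e e0.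
have [n0 hn0] := part1 i m e0.
pose E (kl : 'I_d * 'I_d) (x : word d) :=
  if kl.1 == kl.2 then Bad kl.1 kl.1 m n0 x else ~~ Bad kl.1 kl.2 m n0 x.
have dE kl : dep n0 (E kl).
  by rewrite /E; case: (kl.1 == kl.2); [apply: Bad_dep|apply: dep_neg; apply: Bad_dep].
have hE kl : pr (E kl) <= e.
  rewrite /E; case: eqP => [->|/eqP kl12].
    by rewrite (pr_Bad_diag _ i); apply: ltW.
  rewrite (pr_neg (@Bad_dep d kl.1 kl.2 m n0)).
  have [s [si sj]] := perm_pair ij kl12.
  by rewrite -si -sj pr_Bad_lab; have := hm n0; lra.
have : pr (fun _ => true) <= \sum_kl pr (E kl).
  rewrite (pr_ext (B := fun x => [exists kl, E kl x])); first exact: pr_exists.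
  move=> x; symmetry; apply/existsP.
  have [k [l Hkl]] := cover2 x m n0 ij; by exists (k, l).
rewrite pr_true => h1.
have h2 : \sum_kl pr (E kl) <= \sum_(kl : 'I_d * 'I_d) e.
  by apply: ler_sum => kl _; apply: hE.
have e2 : e * (d * d)%:R = 1 / 2.
  by rewrite /e natrM; field; rewrite ?expf_neq0 ?dnz.
rewrite sumr_const card_prod card_ord -mulr_natr e2 in h2.
lra.
Qed.

Lemma key i j : forall m e, 0 < e -> exists n, pr (Bad i j m n) < e.
Proof. by case: (eqVneq i j) => [<-|ij]; [apply: part1|apply: part2]. Qed.

End Prob.

Theorem lemma4p9 (dsp : measure_display) (T : measurableType dsp)
  (R : realType) (P : probability T R) (d : nat) (hd : (0 < d)%N)
  (X : nat -> T -> 'I_d) (hX : iid_uniform P X) :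
  (forall i : 'I_d, {ae P, forall w,
     forall m : nat, exists t : nat, (m <= t)%N /\
       nballs X i t w = maxballs X t w}) /\
  (forall i j : 'I_d, {ae P, forall w,
     forall m : nat, exists t : nat, (m <= t)%N /\
       nballs X i t w = maxballs X t w /\ nballs X j t w = maxballs X t w}).
Proof.
have H2 : forall i j : 'I_d, {ae P, forall w,
     forall m : nat, exists t : nat, (m <= t)%N /\
       nballs X i t w = maxballs X t w /\ nballs X j t w = maxballs X t w}.
  move=> i j; apply: ae_foralln => m.
  exists (\bigcap_n S X (Bad i j m n)); split.
  - apply: bigcap_measurableType => n _.
    exact: (S_meas hd hX (@Bad_dep d i j m n)).
  - apply/eqP; rewrite eq_le measure_ge0 andbT; apply/lee_addgt0Pr => e e0.
    rewrite add0e; have [n hn] := key hd hX i j m e0.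
    apply: (@le_trans _ _ (P (S X (Bad i j m n)))).
      apply: le_measure; rewrite ?inE.
      + by apply: bigcap_measurableType => k _; exact: (S_meas hd hX (@Bad_dep d i j m k)).
      + exact: (S_meas hd hX (@Bad_dep d i j m n)).
      + by move=> w /(_ n I).
    by rewrite (prEF hd hX (@Bad_dep d i j m n)) lee_fin ltW.
  - move=> w /= nw n _; rewrite /S /=; apply/BadP => t mt tn; apply/negP => G.
    apply: nw; exists t; split => //.
    by move: G => /andP[/eqP h1 /eqP h2]; split.
split; last exact: H2.
move=> i; apply: filterS (H2 i i) => w H m.
by have [t [mt [h _]]] := H m; exists t.
Qed.
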